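(* Let $\mathcal{X}$ and $\mathcal{Y}$ be closed and bounded intervals of $\mathbb{R}$. Let $\{Z_{ij}\}_{i,j\ge 1}$ be real random quantities with $\mathsf{E}(Z_{ij})=0$ and $\mathsf{E}(Z_{ij}Z_{i'j'})=\delta_{ii'}\delta_{jj'}$ (Kronecker delta). Let $\{g_i\}_{i\ge1}$ be continuous real functions on $\mathcal{X}$ and $\{h_j\}_{j\ge1}$ continuous real functions on $\mathcal{Y}$. For each $n$ define the stochastic process $$F^{(n)}(x,y)=\sum_{i=1}^n\sum_{j=1}^n Z_{ij}\,g_i(x)\,h_j(y),\qquad (x,y)\in\mathcal{X}\times\mathcal{Y}.$$ Let $F=\{F(x,y):(x,y)\in\mathcal{X}\times\mathcal{Y}\}$ be a centred real stochastic process with finite second moments. Suppose either that $F=F^{(n)}$ for some finite $n$, or that $F^{(n)}\to F$ in quadratic mean uniformly on $\mathcal{X}\times\mathcal{Y}$, i.e. $\sup_{(x,y)\in\mathcal{X}\times\mathcal{Y}}\mathsf{E}\{(F^{(n)}(x,y)-F(x,y))^2\}\to 0$ as $n\to\infty$. Then $F$ has a continuous separable covariance function.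
   Context: Random quantities are identified up to equality almost surely, and all are centred (mean zero) with finite second moments. The covariance function of a centred process $F$ on $\mathcal{X}\times\mathcal{Y}$ is $\kappa\{(x,y),(x',y')\}=\mathsf{E}\{F(x,y)F(x',y')\}$. The covariance function is called separable if there exist functions $\kappa_x$ on $\mathcal{X}\times\mathcal{X}$ and $\kappa_y$ on $\mathcal{Y}\times\mathcal{Y}$, each symmetric and non-negative definite, such that $\kappa\{(x,y),(x',y')\}=\kappa_x(x,x')\,\kappa_y(y,y')$ for all $(x,y),(x',y')\in\mathcal{X}\times\mathcal{Y}$. ''Continuous separable covariance function'' means $\kappa$ is separable and continuous on $(\mathcal{X}\times\mathcal{Y})^2$. *)

(* Defs.v *)
From HB Require Import structures.
From mathcomp Require Import all_boot all_order all_algebra.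
From mathcomp Require Import all_classical all_reals all_analysis.
Set Implicit Arguments. Unset Strict Implicit. Unset Printing Implicit Defensive.
Import Order.TTheory GRing.Theory Num.Theory.
Import numFieldNormedType.Exports.
Local Open Scope classical_set_scope.
Local Open Scope ring_scope.

Definition kdelta {R : realType} (i i' : nat) : R := if i == i' then 1 else 0.

(* The truncated process F^(n)(x,y) = sum_{i<n} sum_{j<n} Z_ij g_i(x) h_j(y)
   (indices start at 0 instead of 1). *)
Definition Fn {d} {T : measurableType d} {R : realType}
  (Z : nat -> nat -> T -> R) (g h : nat -> R -> R) (n : nat) (x y : R) : T -> R :=
  fun w => \sum_(i < n) \sum_(j < n) Z i j w * g i x * h j y.

(* Covariance function of a centred process F:
   kappa((x,y),(x',y')) = E{F(x,y) F(x',y')} (finite by the second-moment assumption). *)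
Definition covfun {d} {T : measurableType d} {R : realType} (P : probability T R)
  (F : R -> R -> T -> R) (p : (R * R) * (R * R)) : R :=
  fine ('E_P[(fun w => F p.1.1 p.1.2 w * F p.2.1 p.2.2 w)%R])%E.

Definition symmetric_on {R : realType} (A : set R) (k : R -> R -> R) :=
  forall x x', A x -> A x' -> k x x' = k x' x.

Definition nonneg_definite_on {R : realType} (A : set R) (k : R -> R -> R) :=
  forall (n : nat) (t : 'I_n -> R) (c : 'I_n -> R), (forall i, A (t i)) ->
    0 <= \sum_(i < n) \sum_(j < n) c i * c j * k (t i) (t j).

Definition separable_cov {R : realType} (X Y : set R)
  (kappa : (R * R) * (R * R) -> R) :=
  exists (kx ky : R -> R -> R),
    [/\ symmetric_on X kx, nonneg_definite_on X kx,
        symmetric_on Y ky, nonneg_definite_on Y ky &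
        forall x y x' y', X x -> Y y -> X x' -> Y y' ->
          kappa ((x, y), (x', y')) = kx x x' * ky y y'].

(* Main.v *)
Require Import Defs.
From HB Require Import structures.
From mathcomp Require Import all_boot all_order all_algebra.
From mathcomp Require Import all_classical all_reals all_analysis.
From mathcomp Require Import ring lra.
Import Order.TTheory GRing.Theory Num.Theory.
Import numFieldNormedType.Exports.
Local Open Scope classical_set_scope.
Local Open Scope ring_scope.


Section L2.
Context {d} {T : measurableType d} {R : realType} {P : probability T R}.

Definition L2 (f : T -> R) := measurable_fun setT f /\
  P.-integrable setT (fun w => (f w ^+ 2)%:E).
Definition ip (f g : T -> R) : R := fine (\int[P]_w (f w * g w)%:E)%E.

Lemma L2_int {f g} : L2 f -> L2 g -> P.-integrable setT (fun w => (f w * g w)%:E).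
Proof.
move=> [mf f2] [mg g2].
apply: (le_integrable measurableT _ _ (integrableD measurableT f2 g2)).
  by apply/measurable_realfun.measurable_EFinP; exact: measurable_realfun.measurable_funM.
move=> w _ /=; rewrite lee_fin.
rewrite [X in _ <= X]ger0_norm ?addr_ge0 ?sqr_ge0// normrM.
have := sqr_ge0 (`|f w| - `|g w|); rewrite -[f w ^+ 2]real_normK ?num_real//.
rewrite -[g w ^+ 2]real_normK ?num_real// sqrrB.
have := normr_ge0 (f w); have := normr_ge0 (g w); nra.
Qed.

Lemma L2D {f g} : L2 f -> L2 g -> L2 (f \+ g).
Proof.
move=> [mf f2] [mg g2]; split; first exact: measurable_realfun.measurable_funD.
have fg := L2_int (conj mf f2) (conj mg g2).
have := integrableD measurableT (integrableD measurableT f2 g2) (integrableZl measurableT 2 fg).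
move=> H.
by apply: eq_integrable H => // w _ /=; rewrite -EFinM -!EFinD; congr (_%:E); ring.
Qed.

Lemma L2Z k {f} : L2 f -> L2 (fun w => k * f w).
Proof.
move=> [mf f2]; split; first by apply: measurable_realfun.measurable_funM => //; exact: measurable_cst.
have := integrableZl measurableT (k ^+ 2) f2 => H.
by apply: eq_integrable H => // w _ /=; rewrite -EFinM; congr (_%:E); ring.
Qed.

Lemma L2_0 : L2 (fun=> 0).
Proof.
split; first exact: measurable_cst.
apply: eq_integrable (integrable0 _ _) => // w _ /=; by rewrite expr0n.
Qed.

Lemma L2_ext {f g} : (forall w, f w = g w) -> L2 f -> L2 g.
Proof. by move=> e; have -> : f = g by apply/funext. Qed.

Lemma L2_sum I (s : seq I) (u : I -> T -> R) : (forall i, L2 (u i)) ->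
  L2 (fun w => \sum_(i <- s) u i w).
Proof.
move=> hu; elim: s => [|i s ih].
  by move: L2_0; apply: L2_ext => w; rewrite big_nil.
by move: (L2D (hu i) ih); apply: L2_ext => w; rewrite big_cons.
Qed.

Lemma ip_fin {f g} : L2 f -> L2 g -> (\int[P]_w (f w * g w)%:E)%E = (ip f g)%:E.
Proof. by move=> hf hg; rewrite /ip fineK// integrable_fin_num// L2_int. Qed.

Lemma ipC f g : ip f g = ip g f.
Proof. by rewrite /ip; under eq_integral do rewrite mulrC. Qed.

Lemma ipDl {f g h} : L2 f -> L2 g -> L2 h -> ip (f \+ g) h = ip f h + ip g h.
Proof.
move=> hf hg hh; rewrite /ip.
under eq_integral do rewrite /= mulrDl EFinD.
rewrite integralD//; try exact: L2_int.
by rewrite fineD// integrable_fin_num// L2_int.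
Qed.

Lemma ipZl k {f g} : L2 f -> L2 g -> ip (fun w => k * f w) g = k * ip f g.
Proof.
move=> hf hg; rewrite /ip.
under eq_integral do rewrite -mulrA EFinM.
by rewrite integralZl//; [rewrite fineM// integrable_fin_num// L2_int | exact: L2_int].
Qed.

Lemma ip_ge0 f : 0 <= ip f f.
Proof. by rewrite /ip fine_ge0// integral_ge0// => w _; rewrite lee_fin -expr2 sqr_ge0. Qed.

Lemma ip_suml I (s : seq I) (u : I -> T -> R) g : (forall i, L2 (u i)) -> L2 g ->
  ip (fun w => \sum_(i <- s) u i w) g = \sum_(i <- s) ip (u i) g.
Proof.
move=> hu hg; elim: s => [|i s ih].
  rewrite big_nil /ip; under eq_integral do rewrite big_nil mul0r.
  by rewrite integral0.
rewrite big_cons -ih -ipDl//; last exact: L2_sum.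
by congr ip; apply/funext => w; rewrite big_cons.
Qed.


Lemma ipDr {f g h} : L2 f -> L2 g -> L2 h -> ip h (f \+ g) = ip h f + ip h g.
Proof. by move=> hf hg hh; rewrite ipC ipDl // ![ip h _]ipC. Qed.

Lemma ipZr k {f g} : L2 f -> L2 g -> ip g (fun w => k * f w) = k * ip g f.
Proof. by move=> hf hg; rewrite ipC ipZl // ipC. Qed.

Lemma ip_quad {f g} t : L2 f -> L2 g ->
  ip (fun w => f w + t * g w) (fun w => f w + t * g w) =
  ip f f + 2 * t * ip f g + t ^+ 2 * ip g g.
Proof.
move=> hf hg; have hg' := L2Z t hg.
have -> : (fun w => f w + t * g w) = f \+ (fun w => t * g w) by [].
rewrite ipDl // ?ipDr // ?L2D //.
rewrite ipZl // ipZr // ipZr // ipZl // [ip g f]ipC; ring.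
exact: L2D.
Qed.

Lemma quad_disc (A B C : R) : (forall t, 0 <= A + 2 * t * B + t ^+ 2 * C) ->
  0 <= A -> 0 <= C -> B ^+ 2 <= A * C.
Proof.
move=> H hA hC; have [C0|C0] := eqVneq C 0.
  have [B0|B0] := eqVneq B 0; first by rewrite B0 C0 expr0n mulr0.
  have := H (- (A + 1) / (2 * B)); rewrite C0 mulr0 addr0.
  have -> : 2 * (- (A + 1) / (2 * B)) * B = - (A + 1) by field; rewrite B0.
  lra.
have Cp : 0 < C by rewrite lt_def C0 hC.
have := H (- B / C).
have -> : A + 2 * (- B / C) * B + (- B / C) ^+ 2 * C = A - B ^+ 2 / C by field.
rewrite subr_ge0 ler_pdivrMr //.
Qed.

Lemma ip_CS {f g} : L2 f -> L2 g -> ip f g ^+ 2 <= ip f f * ip g g.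
Proof.
move=> hf hg; apply: quad_disc; last exact: ip_ge0; last exact: ip_ge0.
by move=> t; rewrite -ip_quad //; exact: ip_ge0.
Qed.

Lemma ip_par {f g} t : L2 f -> L2 g ->
  ip (fun w => f w + t * g w) (fun w => f w + t * g w) <=
  2 * ip f f + 2 * t ^+ 2 * ip g g.
Proof.
move=> hf hg; rewrite ip_quad //.
have := ip_ge0 (fun w => f w + (- t) * g w); rewrite ip_quad //.
have := ip_ge0 f; have := ip_ge0 g; rewrite sqrrN; lra.
Qed.

Lemma ip_gram n (u : 'I_n -> T -> R) (c : 'I_n -> R) : (forall i, L2 (u i)) ->
  \sum_(i < n) \sum_(j < n) c i * c j * ip (u i) (u j) =
  ip (fun w => \sum_(i < n) c i * u i w) (fun w => \sum_(j < n) c j * u j w).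
Proof.
move=> hu; have hcu : forall i, L2 (fun w => c i * u i w) by move=> i; exact: L2Z.
rewrite ip_suml //; last exact: L2_sum.
apply: eq_bigr => i _; rewrite ipZl //; last exact: L2_sum.
rewrite ipC ip_suml // mulr_sumr; apply: eq_bigr => j _.
by rewrite ipZl // ipC mulrA.
Qed.

Lemma ip_ae {f f' g g'} : L2 f -> L2 f' -> L2 g -> L2 g' ->
  {ae P, forall w, f w = f' w} -> {ae P, forall w, g w = g' w} -> ip f g = ip f' g'.
Proof.
move=> hf hf' hg hg' ef eg; rewrite /ip (ae_eq_integral (fun w => (f' w * g' w)%:E))//.
- exact: measurable_int (L2_int hf hg).
- exact: measurable_int (L2_int hf' hg').
by apply: filterS2 ef eg => w -> ->.
Qed.


Lemma ip_dsum n (a b : 'I_n -> 'I_n -> R) (U : 'I_n -> 'I_n -> T -> R) :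
  (forall i j, L2 (U i j)) ->
  ip (fun w => \sum_(i < n) \sum_(j < n) a i j * U i j w)
     (fun w => \sum_(k < n) \sum_(l < n) b k l * U k l w) =
  \sum_(i < n) \sum_(j < n) a i j * \sum_(k < n) \sum_(l < n) b k l * ip (U i j) (U k l).
Proof.
move=> hU.
have hS : forall (c : 'I_n -> 'I_n -> R) i, L2 (fun w => \sum_(j < n) c i j * U i j w).
  by move=> c i; apply: L2_sum => j; exact: L2Z.
have hSS : forall (c : 'I_n -> 'I_n -> R), L2 (fun w => \sum_(k < n) \sum_(l < n) c k l * U k l w).
  by move=> c; apply: L2_sum => k; exact: hS.
rewrite ip_suml //; apply: eq_bigr => i _.
rewrite ip_suml //; last by move=> j; exact: L2Z.
apply: eq_bigr => j _; rewrite ipZl //; congr (_ * _).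
rewrite ipC ip_suml //; apply: eq_bigr => k _.
rewrite ip_suml //; last by move=> l; exact: L2Z.
by apply: eq_bigr => l _; rewrite ipZl // ipC.
Qed.

Lemma kdelta_sum n (i : 'I_n) (f : 'I_n -> R) :
  \sum_(k < n) f k * kdelta i k = f i.
Proof.
rewrite (bigD1 i) //= big1 ?addr0; first by rewrite /kdelta eqxx mulr1.
move=> k ki; rewrite /kdelta; case: eqP => [/val_inj e|_]; last by rewrite mulr0.
by move: ki; rewrite e eqxx.
Qed.

Lemma Fn_ip (Z : nat -> nat -> T -> R) (g h : nat -> R -> R) n x y x' y' :
  (forall i j, L2 (Z i j)) ->
  (forall i j k l, ip (Z i j) (Z k l) = kdelta i k * kdelta j l) ->
  ip (Fn Z g h n x y) (Fn Z g h n x' y') =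
  (\sum_(i < n) g i x * g i x') * (\sum_(j < n) h j y * h j y').
Proof.
move=> hZ hZZ.
have E : forall x y, Fn Z g h n x y =
    (fun w => \sum_(i < n) \sum_(j < n) (g i x * h j y) * Z i j w).
  move=> u v; apply/funext => w; rewrite /Fn; apply: eq_bigr => i _.
  by apply: eq_bigr => j _; ring.
rewrite !E (ip_dsum n (fun i j => g i x * h j y) (fun i j => g i x' * h j y')
   (fun (i j : 'I_n) => Z i j)) //.
rewrite big_distrlr /=; apply: eq_bigr => i _; apply: eq_bigr => j _.
under eq_bigr do under eq_bigr do rewrite hZZ mulrA.
under eq_bigr do rewrite kdelta_sum.
rewrite (_ : \sum_(k < n) _ = \sum_(k < n) (g k x' * h j y') * kdelta i k).
  by rewrite kdelta_sum; ring.
apply: eq_bigr => k _; rewrite -mulrA; congr (_ * _).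
Qed.


Lemma L2B {f g} : L2 f -> L2 g -> L2 (fun w => f w - g w).
Proof.
move=> hf hg; move: (L2D hf (L2Z (-1) hg)); apply: L2_ext => w /=; ring.
Qed.

Lemma ip_par1 {f g} : L2 f -> L2 g -> ip (f \+ g) (f \+ g) <= 2 * ip f f + 2 * ip g g.
Proof.
move=> hf hg; have := ip_par 1 hf hg.
have -> : (fun w => f w + 1 * g w) = f \+ g by apply/funext => w; rewrite mul1r.
by rewrite expr1n mulr1.
Qed.

Lemma sq_abs (x r : R) : 0 <= r -> x ^+ 2 <= r ^+ 2 -> `|x| <= r.
Proof.
move=> r0 h; rewrite -(ler_sqr (normr_ge0 x) r0) //.
by rewrite -[_ ^+ 2]real_normK ?num_real // normr_id real_normK ?num_real.
Qed.

Lemma unif_ip (D : set (R * R)) (F : R * R -> T -> R) (G : nat -> R * R -> T -> R) (M : R) :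
 0 <= M ->
 (forall p, D p -> L2 (F p)) -> (forall n p, D p -> L2 (G n p)) ->
 (forall p, D p -> ip (F p) (F p) <= M) ->
 (forall del, 0 < del -> exists N, forall n, (N <= n)%N -> forall p, D p ->
     ip (fun w => G n p w - F p w) (fun w => G n p w - F p w) <= del) ->
 forall eps, 0 < eps -> exists N, forall n, (N <= n)%N -> forall p q, D p -> D q ->
   `|ip (G n p) (G n q) - ip (F p) (F q)| <= eps.
Proof.
move=> M0 hF hG hM hc eps e0.
pose C := 2 * M + 2.
have C0 : 0 < C by rewrite /C; lra.
pose k := eps ^+ 2 / (4 * C).
have k0 : 0 < k by rewrite /k divr_gt0 // ?exprn_gt0 //; lra.
have hk : k * (4 * C) = eps ^+ 2 by rewrite /k mulfVK //; apply: lt0r_neq0; lra.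
pose del := Num.min 1 k.
have d0 : 0 < del by rewrite /del lt_min ltr01 k0.
have d1 : del <= 1 by rewrite /del ge_min lexx.
have dk : del <= k by rewrite /del ge_min lexx orbT.
have [N HN] := hc del d0; exists N => n nN p q Dp Dq.
pose vp := fun w => G n p w - F p w.
pose vq := fun w => G n q w - F q w.
have Lvp : L2 vp by apply: L2B; [exact: hG | exact: hF].
have Lvq : L2 vq by apply: L2B; [exact: hG | exact: hF].
have eGp : G n p = F p \+ vp by apply/funext => w; rewrite /vp /=; ring.
have eGq : G n q = F q \+ vq by apply/funext => w; rewrite /vq /=; ring.
have hp := HN n nN p Dp; have hq := HN n nN q Dq.
rewrite -/vp in hp; rewrite -/vq in hq.
have LGq := hG n q Dq.
have E : ip (G n p) (G n q) - ip (F p) (F q) = ip vp (G n q) + ip (F p) vq.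
  rewrite {1}eGp ipDl //; [|exact: hF].
  rewrite {1}eGq ipDr //; [|exact: hF|exact: hF]; ring.
rewrite E.
have bGq : ip (G n q) (G n q) <= C.
  rewrite eGq; apply: (le_trans (ip_par1 (hF q Dq) Lvq)).
  have := hM q Dq; rewrite /C; lra.
have X2 := ip_CS Lvp LGq.
have Y2 := ip_CS (hF p Dp) Lvq.
have ge1 := ip_ge0 vp; have ge2 := ip_ge0 (G n q).
have ge3 := ip_ge0 (F p); have ge4 := ip_ge0 vq.
have hMp := hM p Dp.
have e2 : 0 <= eps / 2 by lra.
have ekC : (eps / 2) ^+ 2 = k * C.
  rewrite /k; field; exact: lt0r_neq0.
have hX : `|ip vp (G n q)| <= eps / 2.
  apply: sq_abs => //.
  have : ip vp vp * ip (G n q) (G n q) <= del * C.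
    by apply: ler_pM.
  move=> H; apply: (le_trans X2); apply: (le_trans H).
  rewrite ekC.
  by apply: ler_wpM2r => //; exact: ltW.
have hY : `|ip (F p) vq| <= eps / 2.
  apply: sq_abs => //.
  have : ip (F p) (F p) * ip vq vq <= M * del.
    by apply: ler_pM.
  move=> H; apply: (le_trans Y2); apply: (le_trans H).
  rewrite ekC.
  rewrite mulrC; apply: ler_pM => //; first exact: ltW.
  rewrite /C; lra.
apply: (le_trans (ler_normD _ _)); lra.
Qed.

End L2.
Arguments L2 {d T R} P f.
Arguments ip {d T R} P f g.


Section Cont.
Context {R : realType}.

Lemma within_comp {X : topologicalType} (Dz : set X) (A : set R) (pi : X -> R)
  (f : R -> R) z : Dz z -> (forall w, Dz w -> A (pi w)) -> {for z, continuous pi} ->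
  {within A, continuous f} -> (f \o pi) @ within Dz (nbhs z) --> f (pi z).
Proof.
move=> Dzz hA cpi /subspace_continuousP /(_ (pi z) (hA z Dzz)) hf U /hf hU.
have := cpi _ hU; rewrite /within /= /nbhs /=.
by apply: filterS => w H Dw; apply: H; exact: hA.
Qed.

Lemma within_cvgD {X : topologicalType} (Dz : set X) z (f g : X -> R) :
  f @ within Dz (nbhs z) --> f z -> g @ within Dz (nbhs z) --> g z ->
  (fun w => f w + g w) @ within Dz (nbhs z) --> f z + g z.
Proof. by move=> hf hg; apply: cvgD. Qed.

Lemma within_cvgM {X : topologicalType} (Dz : set X) z (f g : X -> R) :
  f @ within Dz (nbhs z) --> f z -> g @ within Dz (nbhs z) --> g z ->
  (fun w => f w * g w) @ within Dz (nbhs z) --> f z * g z.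
Proof. by move=> hf hg; apply: cvgM. Qed.

Lemma within_cvg_sum {X : topologicalType} (Dz : set X) z n (f : nat -> X -> R) :
  (forall i, f i @ within Dz (nbhs z) --> f i z) ->
  (fun w => \sum_(i < n) f i w) @ within Dz (nbhs z) --> \sum_(i < n) f i z.
Proof.
move=> hf; elim: n => [|n ih].
  under eq_fun do rewrite big_ord0; rewrite big_ord0; exact: cvg_cst.
under eq_fun do rewrite big_ord_recr /=; rewrite big_ord_recr /=.
exact: within_cvgD.
Qed.

Lemma unif_cont {X : topologicalType} (D : set X) (K : X -> R) (phi : nat -> X -> R) :
 (forall n, {within D, continuous (phi n)}) ->
 (forall eps, 0 < eps -> exists N, forall n, (N <= n)%N -> forall z, D z ->
    `|phi n z - K z| <= eps) ->
 {within D, continuous K}.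
Proof.
move=> hphi hu; apply/subspace_continuousP => z Dz.
apply/cvgrPdist_le => eps eps0.
have e3 : 0 < eps / 3 by rewrite divr_gt0.
have [N HN] := hu _ e3.
have := (subspace_continuousP _ _).1 (hphi N) z Dz.
move=> /cvgrPdist_le /(_ _ e3) H.
have HD : within D (nbhs z) D by apply: withinT.
move: H HD; apply: filterS2 => w H1 Dw.
have h1 := HN N (leqnn N) z Dz; have h2 := HN N (leqnn N) w Dw.
have t1 := ler_distD (phi N z) (K z) (K w).
have t2 := ler_distD (phi N w) (phi N z) (K w).
rewrite distrC in h1.
move: t1 t2 h1 h2 H1; rewrite /from_subspace; lra.
Qed.


Lemma cont_p11 (z : (R * R) * (R * R)) : {for z, continuous (fun z : (R * R) * (R * R) => z.1.1)}.
Proof. by apply: (@continuous_comp _ _ _ fst fst); apply: cvg_fst. Qed.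
Lemma cont_p12 (z : (R * R) * (R * R)) : {for z, continuous (fun z : (R * R) * (R * R) => z.1.2)}.
Proof. apply: (@continuous_comp _ _ _ fst snd); [exact: cvg_fst| by apply: cvg_snd]. Qed.
Lemma cont_p21 (z : (R * R) * (R * R)) : {for z, continuous (fun z : (R * R) * (R * R) => z.2.1)}.
Proof. apply: (@continuous_comp _ _ _ snd fst); [by apply: cvg_snd| exact: cvg_fst]. Qed.
Lemma cont_p22 (z : (R * R) * (R * R)) : {for z, continuous (fun z : (R * R) * (R * R) => z.2.2)}.
Proof. by apply: (@continuous_comp _ _ _ snd snd); apply: cvg_snd. Qed.

Lemma phi_cont (a b c e : R) (g h : nat -> R -> R) n :
 (forall i, {within `[a, b], continuous g i}) -> (forall j, {within `[c, e], continuous h j}) ->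
 {within (`[a, b] `*` `[c, e]) `*` (`[a, b] `*` `[c, e]),
   continuous (fun z : (R * R) * (R * R) => (\sum_(i < n) g i z.1.1 * g i z.2.1) *
                                   (\sum_(j < n) h j z.1.2 * h j z.2.2))}.
Proof.
move=> hg hh; apply/subspace_continuousP => z Dz.
case: Dz => [[Dz1 Dz2] [Dz3 Dz4]].
rewrite /from_subspace /=.
apply: (within_cvgM _ _ (fun w : (R * R) * (R * R) => \sum_(i < n) g i w.1.1 * g i w.2.1) (fun w : (R * R) * (R * R) => \sum_(j < n) h j w.1.2 * h j w.2.2)).
- apply: (within_cvg_sum _ _ _ (fun i (w : (R * R) * (R * R)) => g i w.1.1 * g i w.2.1)) => i.
  apply: (within_cvgM _ _ (fun w : (R * R) * (R * R) => g i w.1.1) (fun w : (R * R) * (R * R) => g i w.2.1)).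
  + apply: (within_comp _ _ (fun z : (R * R) * (R * R) => z.1.1) (g i)) => //.
      by move=> w [[]]. exact: cont_p11.
  + apply: (within_comp _ _ (fun z : (R * R) * (R * R) => z.2.1) (g i)) => //.
      by move=> w [_ []]. exact: cont_p21.
- apply: (within_cvg_sum _ _ _ (fun i (w : (R * R) * (R * R)) => h i w.1.2 * h i w.2.2)) => i.
  apply: (within_cvgM _ _ (fun w : (R * R) * (R * R) => h i w.1.2) (fun w : (R * R) * (R * R) => h i w.2.2)).
  + apply: (within_comp _ _ (fun z : (R * R) * (R * R) => z.1.2) (h i)) => //.
      by move=> w [[]]. exact: cont_p12.
  + apply: (within_comp _ _ (fun z : (R * R) * (R * R) => z.2.2) (h i)) => //.
      by move=> w [_ []]. exact: cont_p22.
Qed.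

End Cont.


Section Sep.
Context {R : realType}.

Definition uconv (u : nat -> R) (U : R) := forall eps, 0 < eps ->
  exists N, forall n, (N <= n)%N -> `|u n - U| <= eps.

Lemma conv_cvg u U : uconv u U -> u @ \oo --> U.
Proof.
move=> h; apply/cvgrPdistC_le => eps e0; have [N HN] := h _ e0.
near=> n; apply: HN; near: n; exact: nbhs_infty_ge.
Unshelve. all: end_near. Qed.

Lemma lim_prod_eq (u v w t : nat -> R) U V W S :
  uconv u U -> uconv v V -> uconv w W -> uconv t S ->
  (forall n, u n * v n = w n * t n) -> U * V = W * S.
Proof.
move=> /conv_cvg hu /conv_cvg hv /conv_cvg hw /conv_cvg ht e.
have h1 : (u \* v) @ \oo --> U * V by apply: cvgM.
have h2 : (w \* t) @ \oo --> W * S by apply: cvgM.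
have E : (u \* v) = (w \* t) by apply/funext => n; exact: e.
rewrite E in h1.
exact: (cvg_unique (@Rhausdorff R) h1 h2).
Qed.

Lemma sep_abs (X Y : set R) (K : (R * R) * (R * R) -> R) :
  (forall p q, (X `*` Y) p -> (X `*` Y) q -> K (p, q) = K (q, p)) ->
  (forall n (t : 'I_n -> R * R) (c : 'I_n -> R), (forall i, (X `*` Y) (t i)) ->
     0 <= \sum_(i < n) \sum_(j < n) c i * c j * K (t i, t j)) ->
  (forall p, (X `*` Y) p -> 0 <= K (p, p)) ->
  (forall p q, (X `*` Y) p -> (X `*` Y) q -> K (p, q) ^+ 2 <= K (p, p) * K (q, q)) ->
  (forall x y x' y' x0 y0, X x -> Y y -> X x' -> Y y' -> X x0 -> Y y0 ->
     K ((x, y), (x', y')) * K ((x0, y0), (x0, y0)) =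
     K ((x, y0), (x', y0)) * K ((x0, y), (x0, y'))) ->
  separable_cov X Y K.
Proof.
move=> Ksym Kpsd Kdiag KCS Kprod.
case: (pselect (exists p, (X `*` Y) p /\ K (p, p) != 0)).
  case=> [[x0 y0] [[hx0 hy0] k0]].
  have k0p : 0 < K ((x0, y0), (x0, y0)) by rewrite lt_def k0 Kdiag.
  exists (fun x x' => K ((x, y0), (x', y0))),
    (fun y y' => K ((x0, y), (x0, y')) / K ((x0, y0), (x0, y0))); split.
  - by move=> x x' hx hx'; apply: Ksym.
  - by move=> n t c ht; apply: (Kpsd n (fun i => (t i, y0)) c) => i; split; [exact: ht | exact: hy0].
  - by move=> y y' hy hy'; rewrite Ksym.
  - move=> n t c ht; have := Kpsd n (fun i => (x0, t i)) c.
    move=> /(_ (fun i => conj hx0 (ht i))) H.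
    rewrite [X in 0 <= X](_ : _ = (\sum_(i < n) \sum_(j < n)
       c i * c j * K ((x0, t i), (x0, t j))) / K ((x0, y0), (x0, y0))).
      by rewrite divr_ge0// ltW.
    rewrite mulr_suml; apply: eq_bigr => i _; rewrite mulr_suml.
    by apply: eq_bigr => j _; rewrite mulrA.
  - move=> x y x' y' hx hy hx' hy'.
    have := Kprod x y x' y' x0 y0 hx hy hx' hy' hx0 hy0.
    move=> H; rewrite mulrA -H mulfK//; exact: lt0r_neq0.
move=> nex.
have z : forall p, (X `*` Y) p -> K (p, p) = 0.
  move=> p hp; apply: contrapT => hne; apply: nex; exists p; split => //.
  exact/eqP.
exists (fun _ _ => 0), (fun _ _ => 0); split.
- by [].
- by move=> n t c _; apply: sumr_ge0 => i _; apply: sumr_ge0 => j _; rewrite mulr0.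
- by [].
- by move=> n t c _; apply: sumr_ge0 => i _; apply: sumr_ge0 => j _; rewrite mulr0.
move=> x y x' y' hx hy hx' hy'.
have := KCS (x, y) (x', y') (conj hx hy) (conj hx' hy').
rewrite (z (x, y) (conj hx hy)) (z (x', y') (conj hx' hy')) mul0r => H /=.
rewrite ?mulr0; apply/eqP; by rewrite -sqrf_eq0 eq_le H sqr_ge0.
Qed.

End Sep.


Theorem proposition1 (d : measure_display) (T : measurableType d) (R : realType)
  (P : probability T R) (a b c e : R) (hab : a <= b) (hce : c <= e)
  (Z : nat -> nat -> {RV P >-> R}) (g h : nat -> R -> R)
  (F : R -> R -> {RV P >-> R})
  (hZ2 : forall i j, P.-integrable setT (fun w => ((Z i j w) ^+ 2)%:E))
  (hZ0 : forall i j, ('E_P[Z i j] = 0)%E)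
  (hZZ : forall i j i' j',
     ('E_P[(fun w => Z i j w * Z i' j' w)%R] = (kdelta i i' * kdelta j j')%:E)%E)
  (hg : forall i, {within `[a, b], continuous g i})
  (hh : forall j, {within `[c, e], continuous h j})
  (hF2 : forall x y, x \in `[a, b] -> y \in `[c, e] ->
     P.-integrable setT (fun w => ((F x y w) ^+ 2)%:E))
  (hF0 : forall x y, x \in `[a, b] -> y \in `[c, e] -> ('E_P[F x y] = 0)%E)
  (hconv :
     (exists n : nat, forall x y, x \in `[a, b] -> y \in `[c, e] ->
        {ae P, forall w, F x y w = Fn Z g h n x y w})
     \/
     (forall eps : R, 0 < eps -> exists N : nat, forall n : nat, (N <= n)%N ->
        forall x y, x \in `[a, b] -> y \in `[c, e] ->
          ('E_P[(fun w => (Fn Z g h n x y w - F x y w) ^+ 2)%R] <= eps%:E)%E)) :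
  separable_cov `[a, b] `[c, e] (covfun P (fun x y => F x y)) /\
  {within (`[a, b] `*` `[c, e]) `*` (`[a, b] `*` `[c, e]),
     continuous (covfun P (fun x y => F x y))}.
Proof.
set K := covfun P (fun x y => F x y).
set D2 := `[a, b] `*` `[c, e].
set DD := D2 `*` D2.
pose Zf := fun i j => (Z i j : T -> R).
pose G := fun n (p : R * R) => Fn Zf g h n p.1 p.2.
pose Fp := fun (p : R * R) => (F p.1 p.2 : T -> R).
pose phi := fun n (z : (R * R) * (R * R)) =>
  (\sum_(i < n) g i z.1.1 * g i z.2.1) * (\sum_(j < n) h j z.1.2 * h j z.2.2).
have LZ : forall i j, L2 P (Zf i j).
  by move=> i j; split; [exact: measurable_funPT | exact: hZ2].
have ipZ : forall i j k l, ip P (Zf i j) (Zf k l) = kdelta i k * kdelta j l.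
  by move=> i j k l; rewrite /ip; move: (hZZ i j k l); rewrite unlock => ->.
have LF : forall p, D2 p -> L2 P (Fp p).
  by move=> [x y] [hx hy]; split; [exact: measurable_funPT | exact: hF2].
have LG : forall n p, L2 P (G n p).
  move=> n [x y]; rewrite /G /Fn /=; apply: L2_sum => i; apply: L2_sum => j.
  by move: (L2Z (g i x * h j y) (LZ i j)); apply: L2_ext => w; ring.
have Kip : forall z, K z = ip P (Fp z.1) (Fp z.2).
  by move=> z; rewrite /K /covfun /ip unlock.
have Gip : forall n z, ip P (G n z.1) (G n z.2) = phi n z.
  by move=> n z; rewrite /G /phi Fn_ip.

have Ksym : forall p q, D2 p -> D2 q -> K (p, q) = K (q, p).
  by move=> p q _ _; rewrite !Kip ipC.
have Kpsd : forall n (t : 'I_n -> R * R) (cc : 'I_n -> R), (forall i, D2 (t i)) ->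
     0 <= \sum_(i < n) \sum_(j < n) cc i * cc j * K (t i, t j).
  move=> n t cc ht.
  under eq_bigr do under eq_bigr do rewrite Kip /=.
  rewrite (ip_gram n (fun i => Fp (t i))); first exact: ip_ge0.
  by move=> i; apply: LF.
have Kdiag : forall p, D2 p -> 0 <= K (p, p).
  by move=> p _; rewrite Kip; exact: ip_ge0.
have KCS : forall p q, D2 p -> D2 q -> K (p, q) ^+ 2 <= K (p, p) * K (q, q).
  by move=> p q hp hq; rewrite !Kip /=; apply: ip_CS; apply: LF.
have claim : exists nu : nat -> nat, forall eps, 0 < eps -> exists N, forall m, (N <= m)%N ->
    forall z, DD z -> `|phi (nu m) z - K z| <= eps.
  case: hconv => [[n0 hn0]|hc].
    exists (fun=> n0) => eps e0; exists 0%N => m _ z [Dz1 Dz2].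
    rewrite Kip -Gip.
    rewrite (ip_ae (LF _ Dz1) (LG n0 z.1) (LF _ Dz2) (LG n0 z.2)).
    - by rewrite subrr normr0 ltW.
    - by case: Dz1 => h1 h2; exact: hn0.
    - by case: Dz2 => h1 h2; exact: hn0.
  have hc' : forall del, 0 < del -> exists N, forall n, (N <= n)%N -> forall p, D2 p ->
      ip P (fun w => G n p w - Fp p w) (fun w => G n p w - Fp p w) <= del.
    move=> del d0; have [N HN] := hc del d0; exists N => n nN [x y] [hx hy].
    have Lv : L2 P (fun w => G n (x, y) w - Fp (x, y) w).
      by apply: L2B; [exact: LG | exact: LF].
    rewrite -lee_fin -(ip_fin Lv Lv).
    move: (HN n nN x y hx hy); rewrite unlock.
    by under eq_integral do rewrite expr2.
  have [N1 HN1] := hc' 1 ltr01.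
  pose fA := fun x => \sum_(i < N1) g i x * g i x.
  pose fB := fun y => \sum_(j < N1) h j y * h j y.
  have cA : {within `[a, b], continuous fA}.
    apply/subspace_continuousP => x hx.
    apply: (within_cvg_sum _ _ _ (fun i x => g i x * g i x)) => i.
    apply: (within_cvgM _ _ (g i) (g i));
      exact: ((subspace_continuousP _ _).1 (hg i) x hx).
  have cB : {within `[c, e], continuous fB}.
    apply/subspace_continuousP => y hy.
    apply: (within_cvg_sum _ _ _ (fun j y => h j y * h j y)) => j.
    apply: (within_cvgM _ _ (h j) (h j));
      exact: ((subspace_continuousP _ _).1 (hh j) y hy).
  have [xm hxm HA] := EVT_max hab cA.
  have [ym hym HB] := EVT_max hce cB.
  have fA0 : forall x, 0 <= fA x by move=> x; apply: sumr_ge0 => i _; rewrite -expr2 sqr_ge0.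
  have fB0 : forall y, 0 <= fB y by move=> y; apply: sumr_ge0 => i _; rewrite -expr2 sqr_ge0.
  pose M := 2 * (fA xm * fB ym) + 2.
  have M0 : 0 <= M by rewrite /M addr_ge0 // mulr_ge0 // mulr_ge0.
  have hM : forall p, D2 p -> ip P (Fp p) (Fp p) <= M.
    move=> p hp.
    have Lv : L2 P (fun w => G N1 p w - Fp p w) by apply: L2B; [exact: LG | exact: LF].
    have := ip_par (-1) (LG N1 p) Lv.
    have -> : (fun w => G N1 p w + (-1) * (G N1 p w - Fp p w)) = Fp p.
      by apply/funext => w; ring.
    have := HN1 N1 (leqnn _) p hp.
    have := Gip N1 (p, p); rewrite /= => ->.
    have : phi N1 (p, p) <= fA xm * fB ym.
      case: hp => h1 h2; rewrite /phi /=.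
      apply: ler_pM; [exact: fA0 | exact: fB0 | exact: HA | exact: HB].
    rewrite /M sqrrN expr1n mulr1; lra.
  exists id => eps e0.
  have [N HN] := unif_ip D2 Fp G M M0 LF (fun n p _ => LG n p) hM hc' eps e0.
  exists N => m hm z [hz1 hz2].
  by rewrite Kip -Gip; exact: HN.
have [nu Hnu] := claim.
split.
  apply: sep_abs => //.
  move=> x y x' y' x0 y0 hx hy hx' hy' hx0 hy0.
  have cv : forall z, DD z -> uconv (fun m => phi (nu m) z) (K z).
    move=> z hz eps e0; have [N HN] := Hnu eps e0; exists N => m hm.
    exact: HN.
  apply: lim_prod_eq.
  - by apply: cv; split; split.
  - by apply: cv; split; split.
  - by apply: cv; split; split.
  - by apply: cv; split; split.
  - by move=> m; rewrite /phi /=; ring.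
apply: (unif_cont _ _ (fun m => phi (nu m))).
  by move=> m; apply: phi_cont.
exact: Hnu.
Qed.
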